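(* Consider the uplink system and the transmit-power minimization problem described in the context. Let $(\mathbf{x},\mathbf{y},\mathbf{W},\mathbf{p})$ be any point satisfying the constraints of that problem (with the antenna-moving-region constraints $0\le x_m\le x_{\max}$, $0\le y_n\le y_{\max}$ omitted, i.e. the region may be arbitrarily large), where every combining vector $\mathbf{w}_k$ is nonzero. Then for every user $k$, $1\le k\le K$, $$p_k\;\ge\;\bar p_k:=\frac{\sigma^2\,(2^{r_k}-1)}{MN\,\|\mathbf{b}_k\|_1^2}.$$
   Context: A base station (BS) has a cross-linked movable antenna array with $M$ columns and $N$ rows of antennas ($MN$ antennas). The horizontal antenna position vector (APV) is $\mathbf{x}=[x_1,\dots,x_M]^{\mathrm T}\in\mathbb{R}^M$ (horizontal coordinate of the $m$-th column), the vertical APV is $\mathbf{y}=[y_1,\dots,y_N]^{\mathrm T}\in\mathbb{R}^N$ (vertical coordinate of the $n$-th row); antenna $(m,n)$ sits at $(x_m,y_n)$. There are $K$ single-antenna users. User $k$ has $L_k$ channel paths with virtual angles $\vartheta_{k,\ell},\varphi_{k,\ell}\in[-1,1]$ and path-response vector $\mathbf{b}_k=[b_{k,1},\dots,b_{k,L_k}]^{\mathrm T}\in\mathbb{C}^{L_k}$, $\mathbf{b}_k\neq\mathbf{0}$; $\lambda>0$ is the wavelength. The channel $\mathbf{h}_k(\mathbf{x},\mathbf{y})\in\mathbb{C}^{MN}$ has entry indexed by $(m-1)N+n$ equal to $\sum_{\ell=1}^{L_k} b_{k,\ell}\,e^{-\mathrm{j}\frac{2\pi}{\lambda}(x_m\vartheta_{k,\ell}+y_n\varphi_{k,\ell})}$.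 With receive combining matrix $\mathbf{W}=[\mathbf{w}_1,\dots,\mathbf{w}_K]\in\mathbb{C}^{MN\times K}$, transmit powers $\mathbf{p}=(p_1,\dots,p_K)$ and noise power $\sigma^2>0$, the SINR of user $k$ is $$\gamma_k=\frac{|\mathbf{w}_k^{\mathrm H}\mathbf{h}_k(\mathbf{x},\mathbf{y})|^2p_k}{\sum_{q\ne k}|\mathbf{w}_k^{\mathrm H}\mathbf{h}_q(\mathbf{x},\mathbf{y})|^2p_q+\|\mathbf{w}_k\|_2^2\sigma^2}.$$ The problem is: minimize $\sum_{k=1}^K p_k$ over $\mathbf{x},\mathbf{y},\mathbf{W},\mathbf{p}$ subject to $\log_2(1+\gamma_k)\ge r_k$ and $p_k\ge0$ for all $k$ (given rate requirements $r_k\ge 0$), $0\le x_m\le x_{\max}$, $x_{m+1}-x_m\ge d_{\min,x}$ ($1\le m\le M-1$), $0\le y_n\le y_{\max}$, $y_{n+1}-y_n\ge d_{\min,y}$ ($1\le n\le N-1$), with given $d_{\min,x},d_{\min,y}>0$. $\|\cdot\|_1$ is the $\ell_1$ norm. *)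

(* Defs.v *)
From mathcomp Require Import all_boot all_order all_algebra.
From mathcomp Require Import complex.
From mathcomp Require Import all_classical all_reals all_analysis.
Set Implicit Arguments. Unset Strict Implicit. Unset Printing Implicit Defensive.
Import Order.TTheory GRing.Theory Num.Theory.
Local Open Scope ring_scope.
Local Open Scope complex_scope.

Section Defs.
Variable R : realType.

Definition csqnorm (z : R[i]) : R := (complex.Re z) ^+ 2 + (complex.Im z) ^+ 2.
Definition cmod (z : R[i]) : R := Num.sqrt (csqnorm z).

Definition cexpj (t : R) : R[i] := cos t +i* sin t.

Definition log2 (x : R) : R := ln x / ln 2.

Definition l1norm (L : nat) (b : 'I_L -> R[i]) : R := \sum_(l < L) cmod (b l).

Variables (M N : nat).
(* vectors of C^{MN}, indexed by antenna (m, n); entry (m-1)N+n of the paper *)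
Definition hinner (w h : 'I_M * 'I_N -> R[i]) : R[i] :=
  \sum_(a : 'I_M * 'I_N) (w a)^* * h a.
Definition sqnorm2 (w : 'I_M * 'I_N -> R[i]) : R :=
  \sum_(a : 'I_M * 'I_N) csqnorm (w a).

(* channel of a user with L paths, virtual angles theta, phi, path responses b,
   wavelength lam, at horizontal APV x and vertical APV y *)
Definition channel (lam : R) (L : nat) (theta phi : 'I_L -> R) (b : 'I_L -> R[i])
  (x : 'I_M -> R) (y : 'I_N -> R) : 'I_M * 'I_N -> R[i] :=
  fun a => \sum_(l < L) b l *
     cexpj (- (2 * pi / lam) * (x a.1 * theta l + y a.2 * phi l)).

Definition sinr (K : nat) (h w : 'I_K -> 'I_M * 'I_N -> R[i]) (p : 'I_K -> R)
  (s2 : R) (k : 'I_K) : R :=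
  csqnorm (hinner (w k) (h k)) * p k /
  (\sum_(q < K | q != k) csqnorm (hinner (w k) (h q)) * p q
   + sqnorm2 (w k) * s2).
End Defs.

(* Main.v *)
Require Import Defs.
From mathcomp Require Import all_boot all_order all_algebra.
From mathcomp Require Import complex.
From mathcomp Require Import all_classical all_reals all_analysis.
From mathcomp Require Import ring lra.
Set Implicit Arguments. Unset Strict Implicit. Unset Printing Implicit Defensive.
Import Order.TTheory GRing.Theory Num.Theory.
Local Open Scope ring_scope.
Local Open Scope complex_scope.

Section H.
Variable R : realType.
Implicit Types z w : R[i].

Lemma cmodE z : cmod z = ComplexField.Normc.normc z.
Proof. by case: z. Qed.

Lemma cmod_ge0 z : 0 <= cmod z.
Proof. exact: sqrtr_ge0. Qed.

Lemma csq_ge0 z : 0 <= csqnorm z.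
Proof. by rewrite /csqnorm addr_ge0 // sqr_ge0. Qed.

Lemma cmod_sq z : cmod z ^+ 2 = csqnorm z.
Proof. by rewrite /cmod sqr_sqrtr // csq_ge0. Qed.

Lemma cmodM z w : cmod (z * w) = cmod z * cmod w.
Proof. by rewrite !cmodE ComplexField.Normc.normcM. Qed.

Lemma cmodD z w : cmod (z + w) <= cmod z + cmod w.
Proof. by rewrite !cmodE le_normcD. Qed.

Lemma cmodJ z : cmod (z^*) = cmod z.
Proof. by case: z => a b; rewrite /cmod /csqnorm /= sqrrN. Qed.

Lemma cmod_cexpj (t : R) : cmod (cexpj t) = 1.
Proof. by rewrite /cmod /csqnorm /= cos2Dsin2 sqrtr1. Qed.

Lemma cmod_sum (I : finType) (F : I -> R[i]) :
  cmod (\sum_i F i) <= \sum_i cmod (F i).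
Proof.
elim/big_rec2: _ => [|i y1 y2 _ IH].
  by rewrite /cmod /csqnorm /= expr0n /= addr0 sqrtr0.
by apply: le_trans (cmodD _ _) _; rewrite lerD2l.
Qed.

Lemma csq_gt0 z : z != 0 -> 0 < csqnorm z.
Proof.
case: z => a b nz; rewrite /csqnorm /=.
case: (eqVneq a 0) => [a0|a0].
  subst a; have b0 : b != 0 by apply: contra nz => /eqP ->.
  by rewrite expr0n /= add0r exprn_even_gt0.
by rewrite ltr_pwDl ?sqr_ge0 // exprn_even_gt0.
Qed.

Lemma sum_sq (I : finType) (u : I -> R) :
  (\sum_i u i) ^+ 2 <= #|I|%:R * \sum_i u i ^+ 2.
Proof.
rewrite expr2 mulr_suml.
have -> : (\sum_i u i * \sum_i u i) = \sum_i \sum_j (u i * u j).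
  by apply: eq_bigr => i _; rewrite mulr_sumr.
apply: (@le_trans _ _ (\sum_(i : I) \sum_(j : I) ((u i ^+ 2 + u j ^+ 2) / 2))).
  apply: ler_sum => i _; apply: ler_sum => j _.
  rewrite ler_pdivlMr // -subr_ge0.
  have -> : u i ^+ 2 + u j ^+ 2 - u i * u j * 2 = (u i - u j) ^+ 2 by ring.
  exact: sqr_ge0.
rewrite le_eqVlt; apply/orP; left; apply/eqP.
under eq_bigr do rewrite -mulr_suml big_split /= sumr_const.
rewrite -mulr_suml big_split /= sumr_const.
rewrite -[in X in _ = X]mulr_natl.
rewrite sumrMnl mulr1 -mulr2n -[_ *+ 2]mulr_natr mulfK ?pnatr_eq0 // mulr_natl.
by [].


Qed.

Lemma channel_bound (M N : nat) (lam : R) (L : nat) (theta phi : 'I_L -> R)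
  (b : 'I_L -> R[i]) (x : 'I_M -> R) (y : 'I_N -> R) a :
  cmod (channel lam theta phi b x y a) <= l1norm b.
Proof.
have -> : channel lam theta phi b x y a = \sum_(l < L) b l * cexpj (- (2 * pi / lam) * (x a.1 * theta l + y a.2 * phi l)) by []. apply: le_trans (cmod_sum (fun l : 'I_L => b l * cexpj (- (2 * pi / lam) * (x a.1 * theta l + y a.2 * phi l)))) _; rewrite /l1norm.
by apply: ler_sum => l _; rewrite cmodM cmod_cexpj mulr1.
Qed.

Lemma inner_bound (M N : nat) (w h : 'I_M * 'I_N -> R[i]) (B : R) :
  0 <= B -> (forall a, cmod (h a) <= B) ->
  csqnorm (hinner w h) <= B ^+ 2 * ((M * N)%:R * sqnorm2 w).
Proof.
move=> B0 hB.
have Hin : cmod (hinner w h) <= B * \sum_a cmod (w a).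
  rewrite /hinner; apply: le_trans (cmod_sum _) _; rewrite mulr_sumr.
  apply: ler_sum => a _; rewrite cmodM cmodJ mulrC.
  by apply: ler_wpM2r; [exact: cmod_ge0 | exact: hB].
rewrite -cmod_sq.
apply: (@le_trans _ _ ((B * \sum_a cmod (w a)) ^+ 2)).
  by rewrite !expr2; apply: ler_pM => //; apply: cmod_ge0.
rewrite exprMn; apply: ler_wpM2l; first exact: sqr_ge0.
apply: le_trans (sum_sq (fun a => cmod (w a))) _.
rewrite card_prod !card_ord natrM /sqnorm2.
by under eq_bigr do rewrite cmod_sq.
Qed.

Lemma l1_pos (L : nat) (b : 'I_L -> R[i]) : b <> (fun _ => 0) -> 0 < l1norm b.
Proof.
move=> bnz.
have /existsNP [l /eqP bl] : ~ forall l, b l = 0.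
  by move=> H; apply: bnz; apply: funext.
rewrite /l1norm (bigD1 l) //=.
apply: (@lt_le_trans _ _ (cmod (b l))).
  by rewrite /cmod sqrtr_gt0 csq_gt0.
by rewrite lerDl sumr_ge0 // => i _; apply: cmod_ge0.
Qed.

Lemma sq_pos (M N : nat) (w : 'I_M * 'I_N -> R[i]) :
  w <> (fun _ => 0) -> 0 < sqnorm2 w /\ (0 < M * N)%N.
Proof.
move=> wnz.
have /existsNP [a /eqP wa] : ~ forall a, w a = 0.
  by move=> H; apply: wnz; apply: funext.
split.
  rewrite /sqnorm2 (bigD1 a) //=.
  apply: (@lt_le_trans _ _ (csqnorm (w a))); first exact: csq_gt0.
  by rewrite lerDl sumr_ge0 // => i _; apply: csq_ge0.
by rewrite muln_gt0 (leq_ltn_trans (leq0n _) (ltn_ord a.1)) (leq_ltn_trans (leq0n _) (ltn_ord a.2)).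
Qed.

End H.

Theorem theorem1 (R : realType) (M N K : nat) (lam s2 dx dy : R)
  (L : 'I_K -> nat)
  (theta phi : forall k : 'I_K, 'I_(L k) -> R)
  (b : forall k : 'I_K, 'I_(L k) -> R[i])
  (r : 'I_K -> R)
  (x : 'I_M -> R) (y : 'I_N -> R)
  (W : 'I_K -> 'I_M * 'I_N -> R[i]) (p : 'I_K -> R) :
  0 < lam -> 0 < s2 -> 0 < dx -> 0 < dy ->
  (forall k l, -1 <= theta k l <= 1) ->
  (forall k l, -1 <= phi k l <= 1) ->
  (forall k, b k <> (fun _ => 0)) ->
  (forall k, 0 <= r k) ->
  (* feasibility of (x, y, W, p), moving-region bounds omitted *)
  (forall (i j : 'I_M), nat_of_ord j = (nat_of_ord i).+1 -> dx <= x j - x i) ->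
  (forall (i j : 'I_N), nat_of_ord j = (nat_of_ord i).+1 -> dy <= y j - y i) ->
  (forall k, 0 <= p k) ->
  (forall k, r k <= log2 (1 + sinr (fun q => channel lam (theta q) (phi q) (b q) x y)
                                   W p s2 k)) ->
  (* every combining vector is nonzero *)
  (forall k, W k <> (fun _ => 0)) ->
  forall k : 'I_K,
    s2 * (powR 2 (r k) - 1) / ((M * N)%:R * (l1norm (b k)) ^+ 2) <= p k.
Proof.
move=> lam0 s20 _ _ _ _ bnz _ _ _ p0 rate Wnz k.
have Bpos := l1_pos (bnz k).
have [sqpos MN0] := sq_pos (Wnz k).
set B := l1norm (b k) in Bpos *.
set sq := sqnorm2 (W k) in sqpos.
have MNpos : 0 < (M * N)%:R :> R by rewrite ltr0n.
set c := (M * N)%:R in MNpos *.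
move: (rate k) => {}rate.
set S := sinr _ _ _ _ k in rate.
set hk := channel lam (theta k) (phi k) (b k) x y.
have Hsq : csqnorm (hinner (W k) hk) <= B ^+ 2 * (c * sq).
  apply: inner_bound; first exact: ltW.
  by move=> a; apply: channel_bound.
set D := (\sum_(q < K | q != k) csqnorm (hinner (W k) (channel lam (theta q) (phi q) (b q) x y)) * p q + sq * s2).
have Dge : sq * s2 <= D.
  rewrite /D lerDr sumr_ge0 // => q _; apply: mulr_ge0 => //; apply: csq_ge0.
have Dpos : 0 < D by apply: lt_le_trans Dge; apply: mulr_gt0.
have SE : S * D = csqnorm (hinner (W k) hk) * p k.
  by rewrite /S /sinr -/D mulfVK // gt_eqF.
have S0 : 0 <= S.
  by rewrite /S /sinr -/D divr_ge0 ?(ltW Dpos) // mulr_ge0 // csq_ge0.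
have H1 : S * (sq * s2) <= B ^+ 2 * (c * sq) * p k.
  apply: (le_trans (ler_wpM2l S0 Dge)); rewrite SE.
  by apply: ler_wpM2r.
have H2 : S * s2 <= c * B ^+ 2 * p k.
  rewrite -(@ler_pM2r _ sq) //.
  have -> : S * s2 * sq = S * (sq * s2) by ring.
  apply: le_trans H1 _; rewrite le_eqVlt; apply/orP; left; apply/eqP; ring.
have ln2 : 0 < ln (2 : R) by apply: ln_gt0; rewrite ltr1n.
have H3 : powR 2 (r k) - 1 <= S.
  rewrite lerBlDl /powR pnatr_eq0 /=.
  have -> : 1 + S = expR (ln (1 + S)).
    by rewrite lnK // posrE ltr_pwDl.
  rewrite ler_expR -ler_pdivlMr //; exact: rate.
rewrite ler_pdivrMr; last by apply: mulr_gt0 => //; apply: exprn_gt0.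
have H4 : (powR 2 (r k) - 1) * s2 <= S * s2 by apply: ler_wpM2r => //; exact: ltW.
have -> : s2 * (powR 2 (r k) - 1) = (powR 2 (r k) - 1) * s2 by rewrite mulrC.
apply: le_trans H4 _; apply: le_trans H2 _.
rewrite le_eqVlt; apply/orP; left; apply/eqP; ring.
Qed.
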